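(* For any initial vector $v_0\in\mathbb{R}^d$ (such that the normalized vectors below are defined) and all $i\in[n]$, $$\|P\widehat v_i\|_2\le\sqrt{\alpha}+\|Pv_0\|_2/\|v_i\|_2.$$ Further, if $v_0=v^*$, then $\|P\widehat v_i\|_2\le\sqrt{\alpha}$.
   Context: Setting: $\phi(x_1),\dots,\phi(x_n)\in\mathbb{R}^d$ are feature vectors of samples $x_1,\dots,x_n$; $\eta\in(0,0.1)$; $\beta\ge\alpha>0$; $v^*\in\mathbb{R}^d$ satisfies $\|v^*\|_2=1$, $\eta\sum_{i=1}^n\langle v^*,\phi(x_i)\rangle^2=\beta$, and $\eta\sum_{i=1}^n\langle w,\phi(x_i)\rangle^2\le\alpha$ for every $w$ with $\|w\|_2\le 1$ and $\langle w,v^*\rangle=0$. $P=I-v^*(v^* )^\top$. Given $v_0$, the iterates are $v_i=v_{i-1}+\eta\langle\phi(x_i),v_{i-1}\rangle\phi(x_i)$ for $i\in[n]$, and $\widehat v_i=v_i/\|v_i\|_2$. *)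

(* Defs.v *)
From HB Require Import structures.
From mathcomp Require Import all_boot all_order all_algebra.
From mathcomp Require Import reals.
Set Implicit Arguments. Unset Strict Implicit. Unset Printing Implicit Defensive.
Import Order.TTheory GRing.Theory Num.Theory.
Local Open Scope ring_scope.

Definition dotv (R : realType) (d : nat) (u v : 'rV[R]_d) : R := (u *m v^T) 0 0.

Definition norm2 (R : realType) (d : nat) (v : 'rV[R]_d) : R := Num.sqrt (dotv v v).

(* P = I - v* v*^T applied to w *)
Definition projP (R : realType) (d : nat) (vs w : 'rV[R]_d) : 'rV[R]_d :=
  w - dotv w vs *: vs.

(* iterates: v_0 given, v_i = v_{i-1} + eta <phi(x_i), v_{i-1}> phi(x_i);
   phi i stands for phi(x_i), i = 1..n (phi 0 unused) *)
Fixpoint oja_iter (R : realType) (d : nat) (eta : R) (phi : nat -> 'rV[R]_d)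
  (v0 : 'rV[R]_d) (i : nat) : 'rV[R]_d :=
  match i with
  | 0 => v0
  | k.+1 => let w := oja_iter eta phi v0 k in
            w + (eta * dotv (phi k.+1) w) *: phi k.+1
  end.

Definition normalize (R : realType) (d : nat) (v : 'rV[R]_d) : 'rV[R]_d :=
  (norm2 v)^-1 *: v.

(* Main.v *)
Require Import Defs.
From HB Require Import structures.
From mathcomp Require Import all_boot all_order all_algebra.
From mathcomp Require Import reals ring lra.
Import Order.TTheory GRing.Theory Num.Theory.
Local Open Scope ring_scope.
Set Implicit Arguments. Unset Strict Implicit.

Section S.
Variables (R : realType) (d : nat).
Implicit Types (u v w : 'rV[R]_d) (a : R).

Lemma dotvE u v : dotv u v = \sum_k u 0 k * v 0 k.
Proof. by rewrite /dotv mxE; apply: eq_bigr => k _; rewrite mxE. Qed.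

Lemma dotvDl u v w : dotv (u + v) w = dotv u w + dotv v w.
Proof. by rewrite !dotvE -big_split; apply: eq_bigr => k _; rewrite mxE mulrDl. Qed.

Lemma dotvBl u v w : dotv (u - v) w = dotv u w - dotv v w.
Proof. by rewrite !dotvE -sumrB; apply: eq_bigr => k _; rewrite !mxE mulrBl. Qed.

Lemma dotvZl a u w : dotv (a *: u) w = a * dotv u w.
Proof. by rewrite !dotvE mulr_sumr; apply: eq_bigr => k _; rewrite mxE mulrA. Qed.

Lemma dotvC u v : dotv u v = dotv v u.
Proof. by rewrite !dotvE; apply: eq_bigr => k _; rewrite mulrC. Qed.

Lemma dotvDr u v w : dotv w (u + v) = dotv w u + dotv w v.
Proof. by rewrite !(dotvC w) dotvDl. Qed.
Lemma dotvBr u v w : dotv w (u - v) = dotv w u - dotv w v.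
Proof. by rewrite !(dotvC w) dotvBl. Qed.
Lemma dotvZr a u w : dotv w (a *: u) = a * dotv w u.
Proof. by rewrite !(dotvC w) dotvZl. Qed.

Lemma dotv_ge0 u : 0 <= dotv u u.
Proof. by rewrite dotvE; apply: sumr_ge0 => k _; rewrite -expr2 sqr_ge0. Qed.

End S.

Lemma CS (R : realType) (I : Type) (r : seq I) (a b : I -> R) :
  (\sum_(j <- r) a j * b j) ^+ 2 <=
  (\sum_(j <- r) a j * a j) * (\sum_(j <- r) b j * b j).
Proof.
set A := \sum_(j <- r) a j * a j; set B := \sum_(j <- r) b j * b j.
set C := \sum_(j <- r) a j * b j.
have key t : 0 <= A - 2 * t * C + t ^+ 2 * B.
  have -> : A - 2 * t * C + t ^+ 2 * B = \sum_(j <- r) (a j - t * b j) ^+ 2.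
    rewrite /A /B /C mulr_sumr mulr_sumr -sumrB -big_split /=.
    by apply: eq_bigr => j _; ring.
  by apply: sumr_ge0 => j _; rewrite sqr_ge0.
have B0 : 0 <= B by apply: sumr_ge0 => j _; rewrite -expr2 sqr_ge0.
have A0 : 0 <= A by apply: sumr_ge0 => j _; rewrite -expr2 sqr_ge0.
have [Bz|Bp] := eqVneq B 0.
  have [Cz|Cn] := eqVneq C 0; first by rewrite Cz Bz expr0n /= mulr0.
  have := key ((A + 1) / (2 * C)); rewrite Bz mulr0 addr0.
  have -> : 2 * ((A + 1) / (2 * C)) * C = A + 1.
    by field; rewrite Cn /=.
  lra.
have Bp' : 0 < B by rewrite lt_def Bp B0.
have := key (C / B).
have -> : A - 2 * (C / B) * C + (C / B) ^+ 2 * B = (A * B - C ^+ 2) / B.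
  by field; rewrite Bp.
rewrite pmulr_lge0 ?invr_gt0 //; lra.
Qed.

Section Main.
Variables (R : realType) (d : nat).
Implicit Types (u v w : 'rV[R]_d) (a : R).

Lemma sqrt_le (X Y : R) : 0 <= Y -> X <= Y ^+ 2 -> Num.sqrt X <= Y.
Proof. by move=> Y0 h; rewrite -(ger0_norm Y0) -sqrtr_sqr ler_wsqrtr. Qed.

Lemma le_sqrt (x Y : R) : x ^+ 2 <= Y -> x <= Num.sqrt Y.
Proof.
move=> h; apply: le_trans (ler_norm x) _.
by rewrite -sqrtr_sqr ler_wsqrtr.
Qed.

Lemma dotCS u v : dotv u v ^+ 2 <= dotv u u * dotv v v.
Proof. rewrite !dotvE; exact: CS. Qed.

Lemma norm2_ge0 u : 0 <= norm2 u.
Proof. exact: sqrtr_ge0. Qed.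

Lemma norm2D u v : norm2 (u + v) <= norm2 u + norm2 v.
Proof.
apply: sqrt_le; first by rewrite addr_ge0 ?norm2_ge0.
rewrite dotvDl !dotvDr (dotvC v u).
have h : dotv u v <= norm2 u * norm2 v.
  by rewrite /norm2 -sqrtrM ?dotv_ge0 //; apply: le_sqrt; apply: dotCS.
have e : (norm2 u + norm2 v) ^+ 2 = dotv u u + 2 * (norm2 u * norm2 v) + dotv v v.
  by rewrite sqrrD /norm2 !sqr_sqrtr ?dotv_ge0 //; ring.
rewrite e; lra.
Qed.

Lemma norm2Z a u : 0 <= a -> norm2 (a *: u) = a * norm2 u.
Proof.
move=> a0; rewrite /norm2 dotvZl dotvZr mulrA -expr2 sqrtrM ?sqr_ge0 //.
by rewrite sqrtr_sqr ger0_norm.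
Qed.

Lemma norm2_0 : norm2 (0 : 'rV[R]_d) = 0.
Proof. by rewrite -(scale0r 0) norm2Z // mul0r. Qed.

Lemma projPD vs u v : projP vs (u + v) = projP vs u + projP vs v.
Proof. by rewrite /projP dotvDl scalerDl opprD addrACA. Qed.

Lemma projPZ vs a u : projP vs (a *: u) = a *: projP vs u.
Proof. by rewrite /projP dotvZl scalerBr scalerA. Qed.

Variables (phi : nat -> 'rV[R]_d) (eta : R).
Notation V v0 k := (oja_iter eta phi v0 k).

Lemma oja_dot u v0 i : dotv u (V v0 i - v0) =
  \sum_(1 <= j < i.+1) eta * dotv (phi j) (V v0 j.-1) * dotv u (phi j).
Proof.
elim: i => [|i IH]; first by rewrite big_geq //= dotvBr subrr.
rewrite big_nat_recr //= -IH addrAC [LHS]dotvDr dotvZr.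
by rewrite mulrC.
Qed.

Lemma oja_norm v0 i : 0 <= eta ->
  eta * \sum_(1 <= j < i.+1) (dotv (phi j) (V v0 j.-1)) ^+ 2 + dotv v0 v0
  <= dotv (V v0 i) (V v0 i).
Proof.
move=> e0; elim: i => [|i IH]; first by rewrite big_geq //= mulr0 add0r.
rewrite big_nat_recr //= dotvDl !dotvDr !dotvZl !dotvZr.
set w := V v0 i; set p := phi i.+1; rewrite (dotvC w p).
set x := dotv p w.
have pp := dotv_ge0 p.
have h1 : 0 <= (eta * x) * ((eta * x) * dotv p p).
  by rewrite mulrA mulr_ge0 // -expr2 sqr_ge0.
have h2 : 0 <= eta * x ^+ 2 by rewrite mulr_ge0 // sqr_ge0.
have -> : eta * x * x = eta * x ^+ 2 by rewrite expr2 mulrA.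
rewrite mulrDr; lra.
Qed.

Lemma partial_le (f : nat -> R) i n : (i <= n)%N -> (forall j, 0 <= f j) ->
  \sum_(1 <= j < i.+1) f j <= \sum_(1 <= j < n.+1) f j.
Proof.
move=> hi f0; rewrite [X in _ <= X](big_cat_nat (n := i.+1)) //=.
by rewrite lerDl sumr_ge0.
Qed.

End Main.

Section Main2.
Variables (R : realType) (d n : nat) (phi : nat -> 'rV[R]_d) (eta alpha : R) (vs : 'rV[R]_d).
Hypotheses (e0 : 0 < eta) (a0 : 0 < alpha) (hvs : norm2 vs = 1)
  (hw : forall w : 'rV[R]_d, norm2 w <= 1 -> dotv w vs = 0 ->
     eta * (\sum_(1 <= i < n.+1) (dotv w (phi i)) ^+ 2) <= alpha).
Notation V v0 k := (oja_iter eta phi v0 k).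

Lemma vsvs : dotv vs vs = 1.
Proof. by rewrite -(sqr_sqrtr (dotv_ge0 vs)) -/(norm2 vs) hvs expr1n. Qed.

Lemma projP_orth x : dotv (projP vs x) vs = 0.
Proof. by rewrite /projP [LHS]dotvBl dotvZl vsvs mulr1 subrr. Qed.

Lemma projP_self x : dotv (projP vs x) (projP vs x) = dotv (projP vs x) x.
Proof. by rewrite {2}/projP [LHS]dotvBr dotvZr projP_orth mulr0 subr0. Qed.

Lemma key_bound v0 i : (i <= n)%N ->
  norm2 (projP vs (V v0 i)) <= Num.sqrt alpha * norm2 (V v0 i) + norm2 (projP vs v0).
Proof.
move=> hi.
set u := projP vs (V v0 i - v0).
have -> : projP vs (V v0 i) = projP vs v0 + u by rewrite /u -projPD addrC subrK.
apply: le_trans (norm2D _ _) _; rewrite addrC lerD2r.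
have uvs : dotv u vs = 0 by apply: projP_orth.
have uu : dotv u u = dotv u (V v0 i - v0) by apply: projP_self.
set U := dotv u u.
set X := \sum_(1 <= j < i.+1) (dotv (phi j) (V v0 j.-1)) ^+ 2.
set Y := \sum_(1 <= j < i.+1) (dotv u (phi j)) ^+ 2.
set Yn := \sum_(1 <= j < n.+1) (dotv u (phi j)) ^+ 2.
set W := dotv (V v0 i) (V v0 i).
have hX : eta * X <= W.
  have := oja_norm phi v0 i (ltW e0); have := dotv_ge0 v0; rewrite -/X -/W; lra.
have X0 : 0 <= X by apply: sumr_ge0 => j _; apply: sqr_ge0.
have Y0 : 0 <= Y by apply: sumr_ge0 => j _; apply: sqr_ge0.
have hY : Y <= Yn by apply: partial_le => // j; apply: sqr_ge0.
have hU2 : U ^+ 2 <= (eta * X) * (eta * Y).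
  rewrite /U uu oja_dot.
  have -> : \sum_(1 <= j < i.+1) eta * dotv (phi j) (V v0 j.-1) * dotv u (phi j)
      = eta * \sum_(1 <= j < i.+1) dotv (phi j) (V v0 j.-1) * dotv u (phi j).
    by rewrite mulr_sumr; apply: eq_bigr => j _; rewrite mulrA.
  set S := \sum_(1 <= j < i.+1) _ * _.
  have hS : S ^+ 2 <= X * Y.
    have := CS (index_iota 1 i.+1) (fun j => dotv (phi j) (V v0 j.-1)) (fun j => dotv u (phi j)).
    rewrite /X /Y /S.
    have sq : forall f : nat -> R, \sum_(1 <= j < i.+1) f j ^+ 2 = \sum_(1 <= j < i.+1) f j * f j.
      by move=> f; apply: eq_bigr => j _; rewrite expr2.
    by rewrite !sq.
  have -> : (eta * S) ^+ 2 = eta ^+ 2 * S ^+ 2 by rewrite exprMn.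
  have -> : eta * X * (eta * Y) = eta ^+ 2 * (X * Y) by ring.
  by rewrite ler_wpM2l ?sqr_ge0.
have U0 : 0 <= U by apply: dotv_ge0.
rewrite /norm2 -/U -/W -sqrtrM ?(ltW a0) //.
have [Uz|Un] := eqVneq U 0.
  by rewrite Uz sqrtr0 sqrtr_ge0.
have Up : 0 < U by rewrite lt_def Un U0.
rewrite ler_wsqrtr //.
have hYn : eta * Yn <= alpha * U.
  set c := (Num.sqrt U)^-1.
  have sU : 0 < Num.sqrt U by rewrite sqrtr_gt0.
  have cU : c ^+ 2 * U = 1.
    by rewrite /c exprVn -{2}(sqr_sqrtr U0) mulVf // expf_neq0 // gt_eqF.
  have := hw (w := c *: u).
  rewrite /norm2 !dotvZl !dotvZr uvs !mulr0 mulrA -expr2 -/U cU sqrtr1 lexx => /(_ isT erefl).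
  have -> : \sum_(1 <= i0 < n.+1) dotv (c *: u) (phi i0) ^+ 2 = c ^+ 2 * Yn.
    by rewrite /Yn mulr_sumr; apply: eq_bigr => j _; rewrite dotvZl exprMn.
  move=> h.
  have : (eta * (c ^+ 2 * Yn)) * U <= alpha * U by rewrite ler_pM2r.
  have -> : eta * (c ^+ 2 * Yn) * U = eta * Yn * (c ^+ 2 * U) by ring.
  by rewrite cU mulr1.
have : U * U <= (alpha * W) * U.
  rewrite -expr2; apply: le_trans hU2 _.
  have -> : alpha * W * U = W * (alpha * U) by ring.
  apply: ler_pM => //.
  - by rewrite mulr_ge0 // ltW.
  - by rewrite mulr_ge0 // ltW.
  - by apply: le_trans hYn; rewrite ler_wpM2l // ltW.
by rewrite ler_pM2r.
Qed.

Lemma final_bound v0 i : (i <= n)%N ->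
  norm2 (projP vs (normalize (V v0 i)))
    <= Num.sqrt alpha + norm2 (projP vs v0) / norm2 (V v0 i).
Proof.
move=> hi; rewrite /normalize projPZ norm2Z ?invr_ge0 ?norm2_ge0 //.
have kb := key_bound v0 hi.
set N := norm2 (V v0 i) in kb *.
have [Nz|Nn] := eqVneq N 0.
  by rewrite Nz invr0 !mul0r mulr0 addr0 sqrtr_ge0.
have Np : 0 < N by rewrite lt_def Nn norm2_ge0.
have Ni : 0 <= N^-1 by rewrite invr_ge0 ltW.
have := ler_wpM2l Ni kb.
have -> : N^-1 * (Num.sqrt alpha * N + norm2 (projP vs v0)) = Num.sqrt alpha * (N^-1 * N) + norm2 (projP vs v0) / N by ring.
rewrite mulVf // mulr1.
by [].
Qed.

End Main2.

Theorem lemmaC1 (R : realType) (d n : nat) (phi : nat -> 'rV[R]_d)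
  (eta alpha beta : R) (vs : 'rV[R]_d) :
  0 < eta -> eta < 1 / 10 ->
  0 < alpha -> alpha <= beta ->
  norm2 vs = 1 ->
  eta * (\sum_(1 <= i < n.+1) (dotv vs (phi i)) ^+ 2) = beta ->
  (forall w : 'rV[R]_d, norm2 w <= 1 -> dotv w vs = 0 ->
     eta * (\sum_(1 <= i < n.+1) (dotv w (phi i)) ^+ 2) <= alpha) ->
  (forall v0 : 'rV[R]_d,
     (forall i, (1 <= i <= n)%N -> oja_iter eta phi v0 i != 0) ->
     forall i, (1 <= i <= n)%N ->
       norm2 (projP vs (normalize (oja_iter eta phi v0 i)))
         <= Num.sqrt alpha + norm2 (projP vs v0) / norm2 (oja_iter eta phi v0 i))
  /\
  (forall i, (1 <= i <= n)%N ->
       norm2 (projP vs (normalize (oja_iter eta phi vs i))) <= Num.sqrt alpha).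
Proof.
move=> e0 _ a0 _ hvs _ hw; split.
  by move=> v0 _ i /andP[_ hi]; apply: (final_bound e0 a0 hvs hw v0 hi).
move=> i /andP[_ hi].
have := final_bound e0 a0 hvs hw vs hi.
have -> : projP vs vs = 0 by rewrite /projP (vsvs hvs) scale1r subrr.
by rewrite norm2_0 mul0r addr0.
Qed.
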